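(* Let $c,h,\alpha,\beta\in\mathbb{C}$, $l,\gamma\in\mathbb{C}^*$ and $k\in\frac12\mathbb{Z}$. In the $\mathcal{D}$-module $M(c,h,l)\otimes\mathbb{C}[y^{\pm\frac12}]$ described below, let $W^{(k)}=\sum_{i\in\frac12\mathbb{Z}_{\ge0}}U(\mathcal{D})(\mathbf{1}\otimes y^{k+i})$ and $W^{(k)}_n=W^{(k)}\cap(M(c,h,l)\otimes y^n)$ for $n\in\frac12\mathbb{Z}$. Then: (1) $W^{(k)}=\sum_{i\in\frac12\mathbb{Z}_{\ge0}}U(\mathcal{D}^-)(\mathbf{1}\otimes y^{k+i})$; (2) $W^{(k)}\supseteq\bigoplus_{i\in\frac12\mathbb{Z},\, i\geq k}M(c,h,l)\otimes y^i$; (3) $M(c,h,l)\otimes y^{k-\frac12}=W^{(k)}_{k-\frac12}\oplus\mathbb{C}(\mathbf{1}\otimes y^{k-\frac12})$; (4) if $P\in U(\mathcal{D}^-)$ is homogeneous and $P\mathbf{1}\otimes y^{k-\frac12}\in W^{(k)}_{k-\frac12}$, then $x\otimes y^{k-\frac12}\in W^{(k)}_{k-\frac12}$ for every $x\in U(\mathcal{D}^-)P\mathbf{1}$.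
   Context: The mirror-twisted Heisenberg–Virasoro algebra $\mathcal{D}$ is the complex Lie algebra with basis $\{d_m,h_r,\mathbf{c},\mathbf{l}: m\in\mathbb{Z}, r\in\frac12+\mathbb{Z}\}$ and brackets $[d_m,d_n]=(m-n)d_{m+n}+\frac{m^3-m}{12}\delta_{m+n,0}\mathbf{c}$, $[d_m,h_r]=-rh_{m+r}$, $[h_r,h_s]=r\delta_{r+s,0}\mathbf{l}$, with $\mathbf{c},\mathbf{l}$ central. $\mathcal{D}^{\pm}=\mathrm{span}\{d_{\pm n},h_{\pm r}: n\in\mathbb{N}, r\in\frac12+\mathbb{Z}_{\ge0}\}$, $\mathcal{D}^0=\mathrm{span}\{d_0,\mathbf{c},\mathbf{l}\}$. Homogeneous elements of $U(\mathcal{D})$ are those of fixed degree, where $\deg d_m=m$, $\deg h_r=r$ (so $d_{-i}$ has degree $-i$). The Verma module is $M(c,h,l)=U(\mathcal{D})\otimes_{U(\mathcal{D}^0\oplus\mathcal{D}^+)}\mathbb{C}\mathbf{1}$ ($d_0\mathbf{1}=h\mathbf{1}$, $\mathbf{c}\mathbf{1}=c\mathbf{1}$, $\mathbf{l}\mathbf{1}=l\mathbf{1}$, $\mathcal{D}^+\mathbf{1}=0$); it equals $U(\mathcal{D}^-)\mathbf{1}$, free over $U(\mathcal{D}^-)$. The vector space $M(c,h,l)\otimes\mathbb{C}[y^{\pm\frac12}]$ is a $\mathcal{D}$-module via, for homogeneous $P\in U(\mathcal{D}^-)$, $i\in\frac12\mathbb{Z}$, $n\in\mathbb{Z}$, $r\in\frac12+\mathbb{Z}$: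 $d_n(P\mathbf{1}\otimes y^i)=\big(d_nP\mathbf{1}+(\alpha+\beta n+\deg(P)-i)P\mathbf{1}\big)\otimes y^{i+n}$, $h_r(P\mathbf{1}\otimes y^i)=\big(h_rP\mathbf{1}+(\delta_{i-\deg(P)\in\mathbb{Z}}+\gamma\,\delta_{i-\deg(P)\notin\mathbb{Z}})P\mathbf{1}\big)\otimes y^{i+r}$, $\mathbf{c}$ and $\mathbf{l}$ acting as $c$ and $l$; here $\delta_{x\in\mathbb{Z}}$ is $1$ if $x\in\mathbb{Z}$ and $0$ otherwise, $\delta_{x\notin\mathbb{Z}}=1-\delta_{x\in\mathbb{Z}}$. (This module is isomorphic to $M(c,h,l)\otimes A(\alpha,\beta,\gamma)$ via $P\mathbf{1}\otimes v_k\mapsto P\mathbf{1}\otimes y^{k+\deg P}$, where $A(\alpha,\beta,\gamma)$ has basis $v_k$, $k\in\frac12\mathbb{Z}$, with $d_mv_k=(\alpha+\beta m-k)v_{m+k}$, $h_rv_n=v_{n+r}$ ($n\in\mathbb{Z}$), $h_rv_s=\gamma v_{r+s}$ ($s\in\frac12+\mathbb{Z}$), $\mathbf{c}=\mathbf{l}=0$.) *)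

(* Defs.v *)
From mathcomp Require Import all_boot all_algebra.
From mathcomp Require Import reals complex.
Import GRing.Theory Num.Theory.

Set Implicit Arguments.
Unset Strict Implicit.
Unset Printing Implicit Defensive.

Local Open Scope ring_scope.

(*  - A basis element of D (other than c, l) is a token (b, m) : bool * int: *)
(*      (false, m)  stands for d_m            (m in Z),                      *)
(*      (true,  s)  stands for h_{s + 1/2}    (s in Z).                      *)
(*  - Elements of (1/2)Z (degrees, exponents of y) are stored doubled:      *)
(*    the integer j stands for j/2.                                          *)

Definition token := (bool * int)%type.

Definition tokdeg (t : token) : int := if t.1 then 2 * t.2 + 1 else 2 * t.2.

(* generator of D^- : d_m with m < 0, or h_{s+1/2} with s + 1/2 < 0 *)
Definition negtok (t : token) : bool := t.2 < 0.

Definition negword (w : seq token) : bool := all negtok w.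

Definition wdeg (w : seq token) : int := \sum_(t <- w) tokdeg t.

Definition oddz (j : int) : bool := odd `|j|%N.

Section Modules.
Variable R : realType.
Local Notation C := (R[i]).
Variable V : lmodType C.
(* action of d_m and of h_{s+1/2} on V *)
Variables (dV hV : int -> {linear V -> V}).

Definition half_odd (s : int) : C := s%:~R + 2%:R^-1.

Definition act_tok (t : token) : V -> V := if t.1 then hV t.2 else dV t.2.

Definition act_word (w : seq token) (v : V) : V := foldr act_tok v w.

(* an element P of U(D), given as a linear combination of words, applied to v *)
Definition evalU (P : seq (C * seq token)) (v : V) : V :=
  \sum_(p <- P) p.1 *: act_word p.2 v.

(* V is a D-module on which c acts as c and l acts as l *)
Definition D_rep (c l : C) : Prop :=
  [/\ (forall (m n : int) (v : V),
         dV m (dV n v) - dV n (dV m v)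
         = (m - n)%:~R *: dV (m + n) v
           + (if m + n == 0 then ((m ^+ 3 - m)%:~R / 12%:R * c) *: v else 0)),
      (forall (m s : int) (v : V),
         dV m (hV s v) - hV s (dV m v) = (- half_odd s) *: hV (m + s) v) &
      (forall (s s' : int) (v : V),
         hV s (hV s' v) - hV s' (hV s v)
         = if s + s' + 1 == 0 then (half_odd s * l) *: v else 0)].

(* ordered (PBW) monomials of U(D^-):
   h_{-r_1} ... h_{-r_p} d_{-n_1} ... d_{-n_q}, indices sorted *)
Definition pbw (w : seq token) : Prop :=
  exists (hs ds : seq int),
    [/\ w = map (fun s => (true, s)) hs ++ map (fun n => (false, n)) ds,
        sorted <=%R hs, sorted <=%R ds,
        all (fun s => s < 0) hs & all (fun n => n < 0) ds].

(* (V, v0) is the Verma module M(c,h,l): a D-module with a highest weight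
   vector v0 of weight (c,h,l), free over U(D^-) on v0, i.e. the ordered
   PBW monomials of U(D^-) applied to v0 form a basis of V. *)
Definition is_Verma (v0 : V) (c h l : C) : Prop :=
  D_rep c l /\
  [/\ dV 0 v0 = h *: v0,
      (forall n : int, 0 < n -> dV n v0 = 0),
      (forall s : int, 0 <= s -> hV s v0 = 0),
      (forall v : V, exists P : seq (C * seq token),
          (forall p, p \in P -> pbw p.2) /\ v = evalU P v0) &
      (forall P : seq (C * seq token),
          uniq (map snd P) -> (forall p, p \in P -> pbw p.2) ->
          evalU P v0 = 0 -> forall p, p \in P -> p.1 = 0)].

(* par is the parity operator P1 |-> (-1)^{2 deg P} P1 on M(c,h,l) (it is
   uniquely determined by these conditions, as V = U(D) v0). *)
Definition parity_op (par : {linear V -> V}) (v0 : V) : Prop :=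
  [/\ par v0 = v0,
      (forall (m : int) (v : V), par (dV m v) = dV m (par v)) &
      (forall (s : int) (v : V), par (hV s v) = - hV s (par v))].

(* t : int -> V represents  sum_j  t j (x) y^{j/2}. *)
Definition T := int -> V.

Definition single (j : int) (v : V) : T := fun j' => if j' == j then v else 0.

Definition sumT (s : seq (int * V)) : T :=
  fun j => \sum_(p <- s | p.1 == j) p.2.

Variables (par : {linear V -> V}) (h alpha beta gamma : C).

(* d_n (P1 (x) y^i) = (d_n P1 + (alpha + beta n + deg P - i) P1) (x) y^{i+n},
   using deg(P) P1 = h P1 - d_0 P1 for homogeneous P. *)
Definition dT (n : int) (t : T) : T :=
  fun j => let j0 := j - 2 * n in let v := t j0 in
    dV n v + (alpha + beta * n%:~R - j0%:~R / 2%:R + h) *: v - dV 0 v.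

(* integral-degree and half-integral-degree components *)
Definition Epart (v : V) : V := 2%:R^-1 *: (v + par v).
Definition Opart (v : V) : V := 2%:R^-1 *: (v - par v).

(* coefficient  delta_{i - deg P in Z} + gamma delta_{i - deg P notin Z},
   for i = j0/2 *)
Definition hcoef (j0 : int) (v : V) : V :=
  if oddz j0 then Opart v + gamma *: Epart v else Epart v + gamma *: Opart v.

(* h_{s+1/2} (P1 (x) y^i) = (h_{s+1/2} P1 + coef P1) (x) y^{i+s+1/2} *)
Definition hT (s : int) (t : T) : T :=
  fun j => let j0 := j - (2 * s + 1) in let v := t j0 in hV s v + hcoef j0 v.

(* action operators of the basis of D (c, l act by scalars) *)
Definition opsD (f : T -> T) : Prop :=
  (exists n : int, f = dT n) \/ (exists s : int, f = hT s).

Definition opsDminus (f : T -> T) : Prop :=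
  (exists n : int, n < 0 /\ f = dT n) \/ (exists s : int, s < 0 /\ f = hT s).

End Modules.

(* U(A) S for a set ops of operators spanning the action of A:
   the smallest subspace containing S and stable under every operator in ops *)
Inductive gen_sub (K : fieldType) (V : lmodType K)
    (ops : ((int -> V) -> (int -> V)) -> Prop) (S : (int -> V) -> Prop)
    : (int -> V) -> Prop :=
  | gs_gen t : S t -> gen_sub ops S t
  | gs_zero : gen_sub ops S (fun _ => 0)
  | gs_add t u : gen_sub ops S t -> gen_sub ops S u ->
                 gen_sub ops S (fun j => t j + u j)
  | gs_scale (a : K) t : gen_sub ops S t -> gen_sub ops S (fun j => a *: t j)
  | gs_op f t : ops f -> gen_sub ops S t -> gen_sub ops S (f t).

(* the generators  1 (x) y^{k+i},  i in (1/2)Z_{>=0}  (k = kk/2) *)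
Definition gensW (K : fieldType) (V : lmodType K) (v0 : V) (kk : int)
    (t : int -> V) : Prop :=
  exists i : int, 0 <= i /\ t = (fun j' => if j' == kk + i then v0 else 0).

(* Main.v *)
Require Import Defs.
From mathcomp Require Import all_boot all_order all_algebra.
From mathcomp Require Import reals complex.
From mathcomp Require Import ring lra zify.
From Stdlib Require Import FunctionalExtensionality IndefiniteDescription.
Import Order.TTheory GRing.Theory Num.Theory.
Set Implicit Arguments.
Unset Strict Implicit.
Unset Printing Implicit Defensive.
Local Open Scope ring_scope.

Lemma oddzE (x : int) : oddz x = ((x %% 2)%Z == 1).
Proof.
have O m : odd m = ((m %% 2)%N == 1%N) by rewrite modn2; case: odd.
rewrite /oddz O; case: x => n /=; do 2 case: eqP; lia.
Qed.
Lemma oddzD (x y : int) : oddz (x + y) = oddz x (+) oddz y.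
Proof. rewrite !oddzE. case: eqP; case: eqP; case: eqP => /=; lia. Qed.
Lemma oddzN (x : int) : oddz (- x) = oddz x.
Proof. by rewrite /oddz abszN. Qed.
Lemma oddzB (x y : int) : oddz (x - y) = oddz x (+) oddz y.
Proof. by rewrite oddzD oddzN. Qed.
Lemma oddz2 (x : int) : oddz (2 * x) = false.
Proof. rewrite oddzE. apply/eqP. lia. Qed.
Lemma oddz1 : oddz 1 = true. Proof. by []. Qed.

Lemma wdeg_nil : wdeg [::] = 0. Proof. by rewrite /wdeg big_nil. Qed.
Lemma wdeg_cons t w : wdeg (t :: w) = tokdeg t + wdeg w.
Proof. by rewrite /wdeg big_cons. Qed.

Definition tokle (a b : token) : bool := if a.1 == b.1 then a.2 <= b.2 else a.1.

Lemma tokle_trans : transitive tokle.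
Proof.
move=> [b2 y] [b1 x] [b3 z]; rewrite /tokle /=.
case: b1; case: b2; case: b3 => //= H1 H2; exact: le_trans H1 H2.
Qed.
Lemma tokle_total a b : tokle a b || tokle b a.
Proof.
case: a b => [b1 x] [b2 y]; rewrite /tokle /=.
by case: b1; case: b2 => //=; apply: le_total.
Qed.

Lemma pbw_nil : pbw [::].
Proof. by exists [::], [::]. Qed.

Lemma pbw_cons g r : negtok g -> pbw r -> all (tokle g) r -> pbw (g :: r).
Proof.
case: g => [[] x] Hg [hs [ds [-> Hhs Hds Hh Hd]]]; rewrite all_cat !all_map => /andP [A1 A2].
- exists (x :: hs), ds; split => //=.
  + rewrite path_min_sorted; first exact: Hhs. by apply: sub_all A1 => s; rewrite /tokle /=.
  + by rewrite Hh andbT.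
- case: hs A1 {Hhs Hh} => [|s hs] /=; last by rewrite /tokle /=.
  move=> _; exists [::], (x :: ds); split => //=.
  + rewrite path_min_sorted; first exact: Hds. by apply: sub_all A2 => s; rewrite /tokle /=.
  + by rewrite Hd andbT.
Qed.

Lemma pbw_tail g r : pbw (g :: r) -> [/\ negtok g, pbw r & all (tokle g) r].
Proof.
case=> [[|s hs] [ds [E Hhs Hds Hh Hd]]].
- case: ds E Hds Hd => [|n ds] //= [-> ->] Hds /andP [Hn Hd]; split => //.
  + by exists [::], ds; split => //; apply: path_sorted Hds.
  + rewrite all_map. have := order_path_min (@le_trans _ int) Hds.
    by apply: sub_all => y; rewrite /tokle /=.
- move: E Hhs Hh => /= [-> ->] Hhs /andP [Hs Hh]; split => //.
  + by exists hs, ds; split => //; apply: path_sorted Hhs.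
  + rewrite all_cat !all_map. apply/andP; split.
      have := order_path_min (@le_trans _ int) Hhs.
      by apply: sub_all => y; rewrite /tokle /=.
    by apply/allP => y _; rewrite /tokle.
Qed.

Section Main.
Variable R : realType.
Local Notation C := (R[i]).
Variable V : lmodType C.
Variables (dV hV : int -> {linear V -> V}) (par : {linear V -> V}) (v0 : V).
Variables (c h l alpha beta gamma : C) (kk : int).
Hypothesis Hver : is_Verma dV hV v0 c h l.
Hypothesis Hpar : parity_op dV hV par v0.

Local Notation act_tok := (act_tok dV hV).
Local Notation act_word := (act_word dV hV).
Local Notation evalU := (evalU dV hV).

Lemma rel_dd m n v : dV m (dV n v) - dV n (dV m v)
         = (m - n)%:~R *: dV (m + n) v
           + (if m + n == 0 then ((m ^+ 3 - m)%:~R / 12%:R * c) *: v else 0).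
Proof. by case: Hver => [[]]. Qed.
Lemma rel_dh m s v : dV m (hV s v) - hV s (dV m v) = (- half_odd R s) *: hV (m + s) v.
Proof. by case: Hver => [[]]. Qed.
Lemma rel_hh s s' v : hV s (hV s' v) - hV s' (hV s v)
         = if s + s' + 1 == 0 then (half_odd R s * l) *: v else 0.
Proof. by case: Hver => [[]]. Qed.

Lemma subr_eqE (a b x : V) : a - b = x -> a = b + x.
Proof. by move=> <-; rewrite addrC subrK. Qed.

Lemma d0d n v : dV 0 (dV n v) = dV n (dV 0 v) + (- n%:~R) *: dV n v.
Proof.
apply: subr_eqE; rewrite rel_dd !add0r ?sub0r.
case: ifP => _; rewrite ?oppr0 ?mul0r ?scale0r addr0 ?mulrNz //.
Qed.
Lemma d0h s v : dV 0 (hV s v) = hV s (dV 0 v) + (- half_odd R s) *: hV s v.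
Proof. by apply: subr_eqE; rewrite rel_dh add0r. Qed.

Definition hdeg (w : seq token) : C := (wdeg w)%:~R / 2%:R.

Lemma act_tokD t : {morph act_tok t : x y / x + y}.
Proof. by case: t => [[] n] x y /=; rewrite /Defs.act_tok /= linearD. Qed.
Lemma act_tokZ t a x : act_tok t (a *: x) = a *: act_tok t x.
Proof. by case: t => [[] n] /=; rewrite /Defs.act_tok /= linearZ. Qed.
Lemma act_tok0 t : act_tok t 0 = 0.
Proof. by case: t => [[] n] /=; rewrite /Defs.act_tok /= linear0. Qed.
Lemma act_word_cons t w x : act_word (t :: w) x = act_tok t (act_word w x).
Proof. by []. Qed.
Lemma act_word_nil x : act_word [::] x = x.
Proof. by []. Qed.
Lemma act_wordD w : {morph act_word w : x y / x + y}.
Proof. elim: w => [|t w IH] x y //. by rewrite !act_word_cons IH act_tokD. Qed.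
Lemma act_wordZ w a x : act_word w (a *: x) = a *: act_word w x.
Proof. elim: w => [|t w IH] //. by rewrite !act_word_cons IH act_tokZ. Qed.
Lemma act_word0 w : act_word w 0 = 0.
Proof. elim: w => [|t w IH] //. by rewrite !act_word_cons IH act_tok0. Qed.

Lemma d0_tok t x e : dV 0 x = (h - e) *: x ->
  dV 0 (act_tok t x) = (h - (e + (tokdeg t)%:~R / 2%:R)) *: act_tok t x.
Proof.
case: t => [[] n] He; rewrite /Defs.act_tok /tokdeg /=.
- rewrite d0h He linearZ -scalerDl. congr (_ *: _).
  rewrite /half_odd. rewrite rmorphD /= rmorphM /=. by field.
- rewrite d0d He linearZ -scalerDl. congr (_ *: _).
  rewrite rmorphM /=. by field.
Qed.
Lemma d0_word w x e : dV 0 x = (h - e) *: x ->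
  dV 0 (act_word w x) = (h - (e + hdeg w)) *: act_word w x.
Proof.
move=> He; elim: w => [|t w IH].
  by rewrite act_word_nil /hdeg wdeg_nil mul0r addr0.
rewrite act_word_cons (d0_tok t IH) /hdeg wdeg_cons rmorphD /=. congr (_ *: _). by field.
Qed.

Definition psign (b : bool) (x : V) := if b then - x else x.

Lemma par_tok t x b : par x = psign b x ->
  par (act_tok t x) = psign (b (+) oddz (tokdeg t)) (act_tok t x).
Proof.
case: Hpar => _ Pd Ph.
case: t => [[] n] He; rewrite /Defs.act_tok /tokdeg /=.
- rewrite Ph He oddzD oddz2 /=. case: b {He} => /=; by rewrite ?linearN ?opprK.
- rewrite Pd He oddz2 addbF. case: b {He} => //=; by rewrite linearN.
Qed.
Lemma par_word w x b : par x = psign b x ->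
  par (act_word w x) = psign (b (+) oddz (wdeg w)) (act_word w x).
Proof.
move=> He; elim: w => [|t w IH]; first by rewrite act_word_nil wdeg_nil /= addbF.
by rewrite act_word_cons (par_tok t IH) wdeg_cons oddzD addbA addbAC.
Qed.

Lemma d0_v0 : dV 0 v0 = (h - 0) *: v0.
Proof. by case: Hver => _ [-> _ _ _ _]; rewrite subr0. Qed.
Lemma par_v0 : par v0 = psign false v0.
Proof. by case: Hpar. Qed.

Lemma evalU_cons p P x : evalU (p :: P) x = p.1 *: act_word p.2 x + evalU P x.
Proof. by rewrite /Defs.evalU big_cons. Qed.
Lemma evalU_nil x : evalU [::] x = 0.
Proof. by rewrite /Defs.evalU big_nil. Qed.

Lemma spanV v : exists P : seq (C * seq token),
    (forall p, p \in P -> pbw p.2) /\ v = evalU P v0.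
Proof. by case: Hver => _ [_ _ _ H _]. Qed.

Lemma pbw_neg w : pbw w -> negword w.
Proof.
case=> hs [ds] [-> _ _ Hh Hd].
rewrite /negword all_cat !all_map. apply/andP; split.
  by apply: sub_all Hh => s.
by apply: sub_all Hd => s.
Qed.

Lemma par_invol v : par (par v) = v.
Proof.
have [P [HP ->]] := spanV v.
elim: P HP => [|p P IH] HP; first by rewrite evalU_nil !linear0.
rewrite evalU_cons !linearD !linearZ IH; last by move=> q Hq; apply: HP; rewrite inE Hq orbT.
rewrite (par_word p.2 par_v0) /psign /=. case E: (oddz (wdeg p.2)); rewrite ?linearN (par_word p.2 par_v0) /psign /= E ?scalerN ?opprK //.
Qed.


Local Notation T := (int -> V).
Local Notation dT' := (dT dV h alpha beta).
Local Notation hT' := (hT hV par gamma).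
Definition opT (t : token) : T -> T := if t.1 then hT' t.2 else dT' t.2.

Definition kd (n j : int) (e : C) : C := alpha + beta * n%:~R - j%:~R / 2%:R + e.
Definition kh (j : int) (b : bool) : C := if oddz j == b then 1 else gamma.
Definition kap (t : token) (j : int) (e : C) (b : bool) : C :=
  if t.1 then kh j b else kd t.2 j e.

Lemma half_xx (x : V) : 2%:R^-1 *: (x + x) = x.
Proof.
rewrite -mulr2n -(scaler_nat 2 x) scalerA mulVf ?scale1r //.
by rewrite pnatr_eq0.
Qed.

Lemma Epart_psign x b : par x = psign b x -> Epart par x = if b then 0 else x.
Proof. by rewrite /Epart => ->; case: b => /=; rewrite ?subrr ?scaler0 ?half_xx. Qed.
Lemma Opart_psign x b : par x = psign b x -> Opart par x = if b then x else 0.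
Proof. by rewrite /Opart => ->; case: b => /=; rewrite ?opprK ?subrr ?scaler0 ?half_xx. Qed.

Lemma hcoef_psign j x b : par x = psign b x -> hcoef par gamma j x = kh j b *: x.
Proof.
move=> Hb; rewrite /hcoef /kh (Epart_psign Hb) (Opart_psign Hb).
by case: oddz; case: b Hb => /= _; rewrite ?scaler0 ?addr0 ?add0r ?scale1r.
Qed.

Lemma single_add j (u v : V) : single j (u + v) = (fun j' => single j u j' + single j v j').
Proof. apply: functional_extensionality => j'; rewrite /single; case: eqP => _ //; by rewrite addr0. Qed.
Lemma single_scale j a (u : V) : single j (a *: u) = (fun j' => a *: single j u j').
Proof. apply: functional_extensionality => j'; rewrite /single; case: eqP => _ //; by rewrite scaler0. Qed.
Lemma single0 j : single j (0 : V) = (fun _ => 0).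
Proof. apply: functional_extensionality => j'; rewrite /single; by case: eqP. Qed.

Lemma dT_single n j (x : V) : dT' n (single j x) =
  single (j + 2 * n) (dV n x + (alpha + beta * n%:~R - j%:~R / 2%:R + h) *: x - dV 0 x).
Proof.
apply: functional_extensionality => j'; rewrite /dT /single.
case: (eqVneq (j' - 2 * n) j) => [E|E].
  by rewrite -E subrK eqxx.
have -> : (j' == j + 2 * n) = false by apply/negbTE; apply: contra E => /eqP ->; rewrite addrK.
by rewrite !linear0 ?scaler0 !addr0 ?subr0.
Qed.

Lemma hT_single s j (x : V) : hT' s (single j x) =
  single (j + (2 * s + 1)) (hV s x + hcoef par gamma j x).
Proof.
apply: functional_extensionality => j'; rewrite /hT /single.
case: (eqVneq (j' - (2 * s + 1)) j) => [E|E].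
  by rewrite -E subrK eqxx.
have -> : (j' == j + (2 * s + 1)) = false by apply/negbTE; apply: contra E => /eqP ->; rewrite addrK.
rewrite /hcoef /Epart /Opart !linear0 !addr0 !scaler0 !addr0 add0r; by case: oddz.
Qed.

Lemma opT_single t j (x : V) e b : dV 0 x = (h - e) *: x -> par x = psign b x ->
  opT t (single j x) = single (j + tokdeg t) (act_tok t x + kap t j e b *: x).
Proof.
move=> He Hb; case: t => [[] n]; rewrite /opT /kap /tokdeg /Defs.act_tok /=.
  by rewrite hT_single (hcoef_psign _ Hb).
rewrite dT_single He. congr single. rewrite -addrA. congr (_ + _).
rewrite -scalerBl /kd. congr (_ *: _). ring.
Qed.

Lemma negtok_deg t : negtok t -> tokdeg t < 0.
Proof. case: t => [[] n]; rewrite /negtok /tokdeg /= => H; lia. Qed.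

Section GenOps.
Variable ops : (T -> T) -> Prop.
Hypothesis Hd : forall n, n < 0 -> ops (dT' n).
Hypothesis Hh : forall s, s < 0 -> ops (hT' s).
Local Notation G := (gen_sub ops (gensW v0 kk)).

Lemma ops_opT t : negtok t -> ops (opT t).
Proof. case: t => [[] n]; rewrite /negtok /opT /= => H; [exact: Hh | exact: Hd]. Qed.

Lemma G_single_add j (u v : V) : G (single j u) -> G (single j v) -> G (single j (u + v)).
Proof. by move=> Hu Hv; rewrite single_add; apply: gs_add. Qed.
Lemma G_single_scale j a (u : V) : G (single j u) -> G (single j (a *: u)).
Proof. by move=> Hu; rewrite single_scale; apply: gs_scale. Qed.
Lemma G_single0 j : G (single j 0).
Proof. by rewrite single0; apply: gs_zero. Qed.

Lemma G_single_word w : negword w -> forall j, kk <= j -> G (single j (act_word w v0)).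
Proof.
elim: w => [|t w IH].
  move=> _ j Hj; apply: gs_gen; exists (j - kk); split; first by rewrite subr_ge0.
  apply: functional_extensionality => j'; by rewrite /single addrC subrK.
move=> /andP [Ht Hw] j Hj.
have Htd := negtok_deg Ht.
have He := d0_word w d0_v0. have Hb := par_word w par_v0.
have H1 : G (single (j - tokdeg t) (act_word w v0)) by apply: IH => //; lia.
have H2 := gs_op (ops_opT Ht) H1.
rewrite (opT_single _ _ He Hb) subrK in H2.
rewrite act_word_cons.
have -> : act_tok t (act_word w v0) =
  (act_tok t (act_word w v0) + kap t (j - tokdeg t) (0 + hdeg w) (false (+) oddz (wdeg w)) *: act_word w v0)
  + (- kap t (j - tokdeg t) (0 + hdeg w) (false (+) oddz (wdeg w))) *: act_word w v0.
  by rewrite -addrA -scalerDl subrr scale0r addr0.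
apply: G_single_add => //; apply: G_single_scale; exact: IH.
Qed.

Lemma G_single (v : V) j : kk <= j -> G (single j v).
Proof.
move=> Hj; have [P [HP ->]] := spanV v.
elim: P HP => [|p P IH] HP; first by rewrite evalU_nil; apply: G_single0.
rewrite evalU_cons; apply: G_single_add; last by apply: IH => q Hq; apply: HP; rewrite inE Hq orbT.
apply: G_single_scale; apply: G_single_word => //.
by apply: pbw_neg; apply: HP; rewrite inE eqxx.
Qed.

Lemma sumT_cons (p : int * V) s : sumT (p :: s) = (fun j => single p.1 p.2 j + sumT s j).
Proof.
apply: functional_extensionality => j; rewrite /sumT big_cons /single eq_sym.
by case: eqP => _ //; rewrite add0r.
Qed.

Lemma G_sumT (s : seq (int * V)) : (forall p, p \in s -> kk <= p.1) -> G (sumT s).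
Proof.
elim: s => [|p s IH] Hs.
  have -> : sumT [::] = (fun _ => 0 : V) by apply: functional_extensionality => j; rewrite /sumT big_nil.
  exact: gs_zero.
rewrite sumT_cons; apply: gs_add.
  by apply: G_single; apply: Hs; rewrite inE eqxx.
by apply: IH => q Hq; apply: Hs; rewrite inE Hq orbT.
Qed.

Lemma lower_word (S : V -> Prop) : S 0 -> (forall u v, S u -> S v -> S (u + v)) ->
  (forall a u, S u -> S (a *: u)) -> (forall w, G (single (kk - 1) w) -> S w) ->
  forall x e b, dV 0 x = (h - e) *: x -> par x = psign b x -> S x ->
  forall w, negword w -> S (act_word w x).
Proof.
move=> S0 SD SZ SW x e b He Hb Sx.
elim=> [_|t w IH /andP [Ht Hw]]; first exact: Sx.
have Htd := negtok_deg Ht.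
have He' := d0_word w He. have Hb' := par_word w Hb.
have H1 : G (single (kk - 1 - tokdeg t) (act_word w x)) by apply: G_single; lia.
have H2 := gs_op (ops_opT Ht) H1.
rewrite (opT_single _ _ He' Hb') subrK in H2.
rewrite act_word_cons.
set k := kap _ _ _ _ in H2.
have -> : act_tok t (act_word w x) = (act_tok t (act_word w x) + k *: act_word w x) + (- k) *: act_word w x.
  by rewrite -addrA -scalerDl subrr scale0r addr0.
apply: (SD _ _); first exact: SW.
by apply: (SZ _ _); apply: IH.
Qed.

End GenOps.


Local Notation L0 := (kk - 1).

Fixpoint phi (w : seq token) : C :=
  if w is t :: u then - kap t (L0 - tokdeg t) (hdeg u) (oddz (wdeg u)) * phi u else 1.

Lemma phi_cons t u : phi (t :: u) = - kap t (L0 - tokdeg t) (hdeg u) (oddz (wdeg u)) * phi u.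
Proof. by []. Qed.

Lemma hdeg_cons t u : hdeg (t :: u) = (tokdeg t)%:~R / 2%:R + hdeg u.
Proof. by rewrite /hdeg wdeg_cons rmorphD /= mulrDl. Qed.

Lemma act_dd m n u x : m < 0 -> n < 0 ->
  act_word ((false, m) :: (false, n) :: u) x =
  act_word ((false, n) :: (false, m) :: u) x + (m - n)%:~R *: act_word ((false, m + n) :: u) x.
Proof.
move=> Hm Hn; rewrite !act_word_cons /Defs.act_tok /=.
apply: subr_eqE; rewrite rel_dd.
have -> : (m + n == 0) = false by apply/negbTE; lia.
by rewrite addr0.
Qed.
Lemma act_dh m s u x :
  act_word ((false, m) :: (true, s) :: u) x =
  act_word ((true, s) :: (false, m) :: u) x + (- half_odd R s) *: act_word ((true, m + s) :: u) x.
Proof. by rewrite !act_word_cons /Defs.act_tok /=; apply: subr_eqE; rewrite rel_dh. Qed.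
Lemma act_hd m s u x :
  act_word ((true, s) :: (false, m) :: u) x =
  act_word ((false, m) :: (true, s) :: u) x + (half_odd R s) *: act_word ((true, m + s) :: u) x.
Proof.
rewrite !act_word_cons /Defs.act_tok /=; apply: subr_eqE.
by rewrite -opprB rel_dh scaleNr opprK.
Qed.
Lemma act_hh s s' u x : s < 0 -> s' < 0 ->
  act_word ((true, s) :: (true, s') :: u) x = act_word ((true, s') :: (true, s) :: u) x.
Proof.
move=> Hs Hs'; rewrite !act_word_cons /Defs.act_tok /=.
apply/eqP; rewrite -subr_eq0; apply/eqP; rewrite rel_hh.
by have -> : (s + s' + 1 == 0) = false by apply/negbTE; lia.
Qed.

Lemma phi_dd m n u : phi ((false, m) :: (false, n) :: u) =
  phi ((false, n) :: (false, m) :: u) + (m - n)%:~R * phi ((false, m + n) :: u).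
Proof.
rewrite !phi_cons !hdeg_cons !wdeg_cons /kap /kd /tokdeg /= /hdeg.
rewrite !(rmorphD, rmorphB, rmorphM, rmorphN) /=. by field.
Qed.

Lemma kh_simpl j b : kh j b = if oddz j == b then 1 else gamma.
Proof. by []. Qed.

Lemma phi_dh m s u : phi ((false, m) :: (true, s) :: u) =
  phi ((true, s) :: (false, m) :: u) + (- half_odd R s) * phi ((true, m + s) :: u).
Proof.
rewrite !phi_cons !hdeg_cons !wdeg_cons /kap /kd /kh /tokdeg /= /hdeg /half_odd.
rewrite !(oddzD, oddzB, oddz2, oddzN) /=.
rewrite ?oddz1.
rewrite !(rmorphD, rmorphB, rmorphM, rmorphN) /=.
case: (oddz kk); case: (oddz (wdeg u)) => /=; by field.
Qed.

Lemma phi_hd m s u : phi ((true, s) :: (false, m) :: u) =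
  phi ((false, m) :: (true, s) :: u) + (half_odd R s) * phi ((true, m + s) :: u).
Proof. by rewrite phi_dh mulNr subrK. Qed.

Lemma phi_hh s s' u : phi ((true, s) :: (true, s') :: u) = phi ((true, s') :: (true, s) :: u).
Proof.
rewrite !phi_cons !hdeg_cons !wdeg_cons /kap /kd /kh /tokdeg /= /hdeg.
rewrite !(oddzD, oddzB, oddz2, oddzN) /=.
rewrite ?oddz1.
case: (oddz kk); case: (oddz (wdeg u)) => /=; by ring.
Qed.

Lemma comm_tok g g1 u x : negtok g -> negtok g1 ->
  (act_word (g :: g1 :: u) x = act_word (g1 :: g :: u) x /\
   phi (g :: g1 :: u) = phi (g1 :: g :: u)) \/
  exists g2 a, [/\ negtok g2, tokdeg g2 = tokdeg g + tokdeg g1,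
    act_word (g :: g1 :: u) x = act_word (g1 :: g :: u) x + a *: act_word (g2 :: u) x &
    phi (g :: g1 :: u) = phi (g1 :: g :: u) + a * phi (g2 :: u)].
Proof.
case: g => [[] m]; case: g1 => [[] n]; rewrite /negtok /= => Hm Hn.
- by left; split; [apply: act_hh | apply: phi_hh].
- right; exists (true, n + m), (half_odd R m); split => //.
  + rewrite /negtok /=; lia.
  + rewrite /tokdeg /=; lia.
  + exact: act_hd.
  + exact: phi_hd.
- right; exists (true, m + n), (- half_odd R n); split => //.
  + rewrite /negtok /=; lia.
  + rewrite /tokdeg /=; lia.
  + exact: act_dh.
  + exact: phi_dh.
- right; exists (false, m + n), (m - n)%:~R; split => //.
  + rewrite /negtok /=; lia.
  + rewrite /tokdeg /=; lia.
  + exact: act_dd.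
  + exact: phi_dd.
Qed.


Definition Good (w : seq token) (p : C * seq token) : Prop :=
  [/\ pbw p.2, wdeg p.2 = wdeg w & (size p.2 < size w)%N \/ perm_eq p.2 w].

Definition Exp (w : seq token) (P : seq (C * seq token)) : Prop :=
  [/\ forall p, p \in P -> Good w p, evalU P v0 = act_word w v0 &
      \sum_(p <- P) p.1 * phi p.2 = phi w].

Lemma Exp_pbw w : pbw w -> Exp w [:: (1, w)].
Proof.
move=> Hw; split.
- move=> p; rewrite inE => /eqP -> /=; split => //; by right.
- by rewrite evalU_cons evalU_nil addr0 scale1r.
- by rewrite big_cons big_nil addr0 mul1r.
Qed.

Lemma Exp_perm w1 w P : Exp w1 P -> act_word w1 v0 = act_word w v0 -> phi w1 = phi w ->
  wdeg w1 = wdeg w -> perm_eq w1 w -> Exp w P.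
Proof.
move=> [HG He Hp] Ha Hph Hd Hperm; split.
- move=> p /HG [H1 H2 H3]; split => //; first by rewrite H2.
  case: H3 => H3; first by left; rewrite -(perm_size Hperm).
  by right; apply: perm_trans H3 Hperm.
- by rewrite He.
- by rewrite Hp.
Qed.

Lemma evalU_cat P Q x : evalU (P ++ Q) x = evalU P x + evalU Q x.
Proof. by rewrite /Defs.evalU big_cat. Qed.
Lemma evalU_scale a P x : evalU [seq (a * p.1, p.2) | p <- P] x = a *: evalU P x.
Proof. rewrite /Defs.evalU big_map scaler_sumr; apply: eq_bigr => p _; by rewrite scalerA. Qed.
Lemma sumphi_scale a (P : seq (C * seq token)) :
  \sum_(p <- [seq (a * p.1, p.2) | p <- P]) p.1 * phi p.2 = a * \sum_(p <- P) p.1 * phi p.2.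
Proof. rewrite big_map mulr_sumr; apply: eq_bigr => p _ /=; by rewrite mulrA. Qed.

Lemma Exp_comb w1 w2 w a P1 P2 : Exp w1 P1 -> Exp w2 P2 ->
  act_word w v0 = act_word w1 v0 + a *: act_word w2 v0 ->
  phi w = phi w1 + a * phi w2 -> wdeg w1 = wdeg w -> wdeg w2 = wdeg w ->
  perm_eq w1 w -> (size w2 < size w)%N ->
  Exp w (P1 ++ [seq (a * p.1, p.2) | p <- P2]).
Proof.
move=> [HG1 He1 Hp1] [HG2 He2 Hp2] Ha Hph Hd1 Hd2 Hperm Hs; split.
- move=> p; rewrite mem_cat => /orP [/HG1 [H1 H2 H3]|/mapP [q /HG2 [H1 H2 H3] ->]].
  + split => //; first by rewrite H2.
    case: H3 => H3; first by left; rewrite -(perm_size Hperm).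
    by right; apply: perm_trans H3 Hperm.
  + split => //=; first by rewrite H2.
    left; case: H3 => H3; first exact: ltn_trans H3 Hs.
    by rewrite (perm_size H3).
- by rewrite evalU_cat evalU_scale He1 He2 Ha.
- by rewrite big_cat /= sumphi_scale Hp1 Hp2 Hph.
Qed.

Lemma act_tok_evalU g Q x :
  act_tok g (evalU Q x) = \sum_(q <- Q) q.1 *: act_word (g :: q.2) x.
Proof.
elim: Q => [|q Q IH]; first by rewrite evalU_nil act_tok0 big_nil.
by rewrite evalU_cons act_tokD act_tokZ IH big_cons.
Qed.

Lemma kap_wdeg t j u1 u2 : wdeg u1 = wdeg u2 ->
  kap t j (hdeg u1) (oddz (wdeg u1)) = kap t j (hdeg u2) (oddz (wdeg u2)).
Proof. by rewrite /hdeg => ->. Qed.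

Lemma sumphi_prefix g u (Q : seq (C * seq token)) : (forall q, q \in Q -> wdeg q.2 = wdeg u) ->
  \sum_(q <- Q) q.1 * phi (g :: q.2) =
  - kap g (L0 - tokdeg g) (hdeg u) (oddz (wdeg u)) * \sum_(q <- Q) q.1 * phi q.2.
Proof.
elim: Q => [|q Q IH] HQ; first by rewrite !big_nil mulr0.
rewrite !big_cons IH; last by move=> q' Hq'; apply: HQ; rewrite inE Hq' orbT.
rewrite phi_cons (kap_wdeg _ _ (HQ q _)); last by rewrite inE eqxx.
by rewrite mulrDr; congr (_ + _); rewrite !mulrA [q.1 * _]mulrC.
Qed.

Lemma Good_prefix g u q r : Good u q -> Good (g :: q.2) r -> Good (g :: u) r.
Proof.
move=> [Hq1 Hq2 Hq3] [Hr1 Hr2 Hr3]; split => //.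
  by rewrite Hr2 !wdeg_cons Hq2.
case: Hq3 => Hq3; case: Hr3 => Hr3.
- left; rewrite /= ltnS; apply: (leq_trans _ (ltnW Hq3)); by rewrite -ltnS.
- by left; rewrite (perm_size Hr3) /= ltnS.
- by left; rewrite /= -(perm_size Hq3).
- by right; apply: (perm_trans Hr3); rewrite perm_cons.
Qed.

Lemma prefix_aux g u (Q : seq (C * seq token)) : (forall q, q \in Q -> Good u q) ->
  (forall q, q \in Q -> exists R, Exp (g :: q.2) R) ->
  exists P, [/\ forall p, p \in P -> Good (g :: u) p,
    evalU P v0 = \sum_(q <- Q) q.1 *: act_word (g :: q.2) v0 &
    \sum_(p <- P) p.1 * phi p.2 = \sum_(q <- Q) q.1 * phi (g :: q.2)].
Proof.
elim: Q => [|q Q IH] HG HE.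
  by exists [::]; split => //; rewrite ?evalU_nil !big_nil.
have [P [HP1 HP2 HP3]] : exists P, [/\ forall p, p \in P -> Good (g :: u) p,
    evalU P v0 = \sum_(q <- Q) q.1 *: act_word (g :: q.2) v0 &
    \sum_(p <- P) p.1 * phi p.2 = \sum_(q <- Q) q.1 * phi (g :: q.2)].
  apply: IH => q' Hq'; [apply: HG | apply: HE]; by rewrite inE Hq' orbT.
have [RR [HR1 HR2 HR3]] : exists R0, Exp (g :: q.2) R0 by apply: HE; rewrite inE eqxx.
exists ([seq (q.1 * p.1, p.2) | p <- RR] ++ P); split.
- move=> p; rewrite mem_cat => /orP [/mapP [r Hr ->]|/HP1] //.
  apply: (@Good_prefix g u q (q.1 * r.1, r.2)); first by apply: HG; rewrite inE eqxx.
  by have := HR1 r Hr.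
- by rewrite evalU_cat evalU_scale HR2 HP2 big_cons.
- by rewrite big_cat /= sumphi_scale HR3 HP3 big_cons.
Qed.

Lemma Exp_prefix g u Q : Exp u Q ->
  (forall q, q \in Q -> exists R, Exp (g :: q.2) R) -> exists P, Exp (g :: u) P.
Proof.
move=> [HG He Hp] HE.
have [P [HP1 HP2 HP3]] := prefix_aux HG HE.
exists P; split => //.
- by rewrite HP2 -act_tok_evalU He.
- rewrite HP3 (@sumphi_prefix g u) ?Hp //.
  by move=> q /HG [].
Qed.

Lemma straighten n : forall w, negword w -> (size w <= n)%N -> exists P, Exp w P.
Proof.
elim: n => [|n IHn].
  by case=> // _ _; exists [:: (1, [::])]; apply: Exp_pbw; exact: pbw_nil.
have B : forall g q, negtok g -> pbw q -> (size q <= n)%N -> exists P, Exp (g :: q) P.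
  move=> g [|g1 q'] Hg Hq Hs.
    exists [:: (1, [:: g])]; apply: Exp_pbw; apply: pbw_cons => //; exact: pbw_nil.
  have [Hg1 Hq' Hall] := pbw_tail Hq.
  have Hnq' := pbw_neg Hq'.
  case: (boolP (tokle g g1)) => Hle.
    exists [:: (1, g :: g1 :: q')]; apply: Exp_pbw; apply: pbw_cons => //.
    rewrite /= Hle /=; apply/allP => y Hy.
    by apply: tokle_trans Hle _; move/allP: Hall; apply.
  have Hle' : tokle g1 g by move: (tokle_total g g1); rewrite (negbTE Hle).
  have [R2 HR2] : exists R0, Exp (g :: q') R0 by apply: IHn => //=; rewrite Hg Hnq'.
  have [P1 HP1] : exists P, Exp (g1 :: g :: q') P.
    apply: (Exp_prefix HR2) => r Hr.
    case: HR2 => HG _ _; case: (HG r Hr) => Hr1 Hr2 [Hr3|Hr3].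
      apply: IHn; first by rewrite /= Hg1 pbw_neg.
      by rewrite /=; move: Hr3 Hs => /= Hr3 Hs; apply: leq_trans Hr3 Hs.
    exists [:: (1, g1 :: r.2)]; apply: Exp_pbw; apply: pbw_cons => //.
    by rewrite (perm_all _ Hr3) /= Hle' Hall.
  have Hperm : perm_eq (g1 :: g :: q') (g :: g1 :: q').
    by rewrite (perm_catCA [:: g1] [:: g] q').
  have Hwd : wdeg (g1 :: g :: q') = wdeg (g :: g1 :: q').
    by rewrite !wdeg_cons addrCA.
  case: (@comm_tok g g1 q' v0 Hg Hg1) => [[Ha Hp]|[g2 [a [Hg2 Hd2 Ha Hp]]]].
  - by exists P1; apply: Exp_perm HP1 _ _ Hwd Hperm.
  - have [P2 HP2] : exists P, Exp (g2 :: q') P by apply: IHn; rewrite /= ?Hg2 ?Hnq'.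
    exists (P1 ++ [seq (a * p.1, p.2) | p <- P2]).
    apply: (Exp_comb HP1 HP2) => //.
    by rewrite !wdeg_cons Hd2 addrA.
case=> [|g u] Hw Hs; first by exists [:: (1, [::])]; apply: Exp_pbw; exact: pbw_nil.
move: Hw => /andP [Hg Hu].
have [Q HQ] : exists Q, Exp u Q by apply: IHn.
apply: (Exp_prefix HQ) => q Hq.
case: HQ => HG _ _; case: (HG q Hq) => Hq1 Hq2 [Hq3|Hq3].
- apply: IHn; first by rewrite /= Hg pbw_neg.
  by move: Hs; rewrite /= !ltnS => Hs; apply: leq_trans Hq3 Hs.
- by apply: B => //; rewrite (perm_size Hq3).
Qed.

Lemma straighten_word w : negword w -> exists P, Exp w P.
Proof. move=> Hw; exact: (@straighten (size w)). Qed.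


Lemma partition_sum (M : nmodType) (F : C * seq token -> M) (Q : seq (C * seq token)) :
  \sum_(q <- Q) F q = \sum_(w <- undup (map snd Q)) \sum_(q <- Q | q.2 == w) F q.
Proof.
rewrite (exchange_big_dep predT) //=.
apply: eq_big_seq => q Hq.
have Hin : q.2 \in undup (map snd Q) by rewrite mem_undup; apply: map_f.
rewrite (big_rem q.2 Hin) /= eqxx big1_seq ?addr0 //.
move=> w /andP [/eqP Ew Hw]; exfalso.
move: Hw; rewrite -Ew. move: (undup_uniq (map snd Q)) => U.
by rewrite (mem_rem_uniqF _ U).
Qed.

Lemma indep Q : (forall q, q \in Q -> pbw q.2) -> evalU Q v0 = 0 ->
  \sum_(q <- Q) q.1 * phi q.2 = 0.
Proof.
move=> HQ HE.
pose ws := undup (map snd Q).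
pose Q' := [seq (\sum_(q <- Q | q.2 == w) q.1, w) | w <- ws].
have Hind : forall p, p \in Q' -> p.1 = 0.
  case: Hver => _ [_ _ _ _ Hi]; apply: Hi.
  - by rewrite /Q' -map_comp map_id undup_uniq.
  - move=> p /mapP [w Hw ->] /=. move: Hw; rewrite mem_undup => /mapP [q Hq ->].
    exact: HQ.
  - rewrite -HE /Defs.evalU (partition_sum (fun q => q.1 *: act_word q.2 v0) Q) /Q' big_map.
    apply: eq_bigr => w _ /=. rewrite scaler_suml. apply: eq_bigr => q /eqP -> //.
rewrite (partition_sum (fun q => q.1 * phi q.2) Q).
apply: big1_seq => w /andP [_ Hw].
have -> : \sum_(q <- Q | q.2 == w) q.1 * phi q.2 = (\sum_(q <- Q | q.2 == w) q.1) * phi w.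
  rewrite mulr_suml. apply: eq_bigr => q /eqP -> //.
have -> : \sum_(q <- Q | q.2 == w) q.1 = 0.
  apply: (Hind (\sum_(q <- Q | q.2 == w) q.1, w)).
  by apply/mapP; exists w.
by rewrite mul0r.
Qed.

Definition Phi (v : V) : C :=
  \sum_(p <- proj1_sig (constructive_indefinite_description _ (spanV v))) p.1 * phi p.2.

Lemma Phi_eval P : (forall p, p \in P -> pbw p.2) ->
  Phi (evalU P v0) = \sum_(p <- P) p.1 * phi p.2.
Proof.
move=> HP; rewrite /Phi.
case: (constructive_indefinite_description _ _) => P' [HP' E] /=.
have := @indep (P' ++ [seq (-1 * p.1, p.2) | p <- P]).
rewrite big_cat /= sumphi_scale evalU_cat evalU_scale -E scaleN1r subrr.
move=> H; apply/eqP; rewrite -subr_eq0 -mulN1r; apply/eqP; apply: H => //.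
move=> p; rewrite mem_cat => /orP [H|/mapP [q Hq ->]]; [exact: HP' | exact: (HP q Hq)].
Qed.

Lemma Phi_word w : negword w -> Phi (act_word w v0) = phi w.
Proof.
move=> Hw; have [P [HG He Hp]] := straighten_word Hw.
rewrite -He Phi_eval ?Hp //. by move=> p /HG [].
Qed.

Lemma Phi_add u v : Phi (u + v) = Phi u + Phi v.
Proof.
have [Pu [Hu ->]] := spanV u; have [Pv [Hv ->]] := spanV v.
rewrite -evalU_cat !Phi_eval ?big_cat //.
by move=> p; rewrite mem_cat => /orP [/Hu|/Hv].
Qed.
Lemma Phi_scale a v : Phi (a *: v) = a * Phi v.
Proof.
have [P [HP ->]] := spanV v.
rewrite -evalU_scale !Phi_eval ?sumphi_scale //.
by move=> p /mapP [q Hq ->]; exact: (HP q Hq).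
Qed.
Lemma Phi0 : Phi 0 = 0.
Proof. by rewrite -(scale0r 0) Phi_scale mul0r. Qed.
Lemma Phi_v0 : Phi v0 = 1.
Proof. by rewrite -[v0]/(act_word [::] v0) Phi_word. Qed.

Lemma Epart_add u v : Epart par (u + v) = Epart par u + Epart par v.
Proof. by rewrite /Epart [par (u + v)]linearD addrACA scalerDr. Qed.
Lemma Opart_add u v : Opart par (u + v) = Opart par u + Opart par v.
Proof. by rewrite /Opart [par (u + v)]linearD opprD addrACA scalerDr. Qed.
Lemma Epart_scale a u : Epart par (a *: u) = a *: Epart par u.
Proof. by rewrite /Epart [par (a *: u)]linearZ -scalerDr !scalerA mulrC. Qed.
Lemma Opart_scale a u : Opart par (a *: u) = a *: Opart par u.
Proof. by rewrite /Opart [par (a *: u)]linearZ -scalerBr !scalerA mulrC. Qed.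
Lemma hcoef_add j u v : hcoef par gamma j (u + v) = hcoef par gamma j u + hcoef par gamma j v.
Proof.
rewrite /hcoef !(Epart_add, Opart_add) !scalerDr; case: oddz; by rewrite addrACA.
Qed.
Lemma hcoef_scale j a u : hcoef par gamma j (a *: u) = a *: hcoef par gamma j u.
Proof.
rewrite /hcoef; case: oddz; rewrite Epart_scale Opart_scale scalerDr;
  by congr (_ + _); rewrite !scalerA [gamma * a]mulrC.
Qed.

Lemma add3ACA (a1 a2 b1 b2 c1 c2 : V) :
  (a1 + a2) + (b1 + b2) - (c1 + c2) = (a1 + b1 - c1) + (a2 + b2 - c2).
Proof. by rewrite opprD (addrACA a1 a2 b1 b2) (addrACA (a1 + b1)). Qed.

Lemma opT_add g (t1 t2 : T) : opT g (fun j => t1 j + t2 j) = (fun j => opT g t1 j + opT g t2 j).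
Proof.
apply: functional_extensionality => j; case: g => [[] n]; rewrite /opT /=.
- by rewrite /hT linearD hcoef_add addrACA.
- by rewrite /dT (linearD (dV n)) (linearD (dV 0)) scalerDr add3ACA.
Qed.
Lemma opT_scale g a (t : T) : opT g (fun j => a *: t j) = (fun j => a *: opT g t j).
Proof.
apply: functional_extensionality => j; case: g => [[] n]; rewrite /opT /=.
- by rewrite /hT linearZ hcoef_scale scalerDr.
- rewrite /dT [dV n (_ *: _)]linearZ [dV 0 (_ *: _)]linearZ scalerBr scalerDr; congr (_ + _ - _); by rewrite !scalerA mulrC.
Qed.
Lemma opT_zero g : opT g (fun _ => 0 : V) = (fun _ => 0).
Proof.
apply: functional_extensionality => j; case: g => [[] n]; rewrite /opT /=.
- rewrite /hT /hcoef /Epart /Opart !linear0 !addr0 !scaler0 !addr0 add0r; by case: oddz.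
- by rewrite /dT !linear0 ?scaler0 !addr0 ?subr0.
Qed.

Lemma opT_local g (t : T) : opT g t L0 = opT g (single (L0 - tokdeg g) (t (L0 - tokdeg g))) L0.
Proof.
case: g => [[] n]; rewrite /opT /tokdeg /= /hT /dT /single; by rewrite eqxx.
Qed.

Lemma Phi_op g (t : T) : negtok g -> Phi (opT g t L0) = 0.
Proof.
move=> Hg; rewrite opT_local.
set j0 := L0 - tokdeg g.
have [P [HP ->]] := spanV (t j0).
elim: P HP => [|p P IH] HP.
  by rewrite evalU_nil single0 opT_zero Phi0.
rewrite evalU_cons single_add opT_add single_scale opT_scale Phi_add Phi_scale.
rewrite IH; last by move=> q Hq; apply: HP; rewrite inE Hq orbT.
have Hp : pbw p.2 by apply: HP; rewrite inE eqxx.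
rewrite (opT_single _ _ (d0_word p.2 d0_v0) (par_word p.2 par_v0)).
rewrite /single /j0 subrK eqxx Phi_add Phi_scale.
have Hn1 : negword p.2 := pbw_neg Hp.
have Hn2 : negword (g :: p.2) by rewrite /= Hg Hn1.
by rewrite -act_word_cons !Phi_word // phi_cons add0r mulNr addNr mulr0 addr0.
Qed.

Lemma Wminus_Phi t : gen_sub (opsDminus dV hV par h alpha beta gamma) (gensW v0 kk) t ->
  Phi (t L0) = 0.
Proof.
elim=> {t}.
- move=> t [i [Hi ->]]. have -> : (L0 == kk + i) = false by apply/negbTE; lia.
  exact: Phi0.
- exact: Phi0.
- by move=> t u _ Ht _ Hu; rewrite Phi_add Ht Hu addr0.
- by move=> a t _ Ht; rewrite Phi_scale Ht mulr0.
- move=> f t [[n [Hn ->]]|[s [Hs ->]]] _ _.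
  + by apply: (@Phi_op (false, n)).
  + by apply: (@Phi_op (true, s)).
Qed.


Definition cg2 (g g1 : token) : token :=
  if g.1 then (if g1.1 then g else (true, g1.2 + g.2))
  else (if g1.1 then (true, g.2 + g1.2) else (false, g.2 + g1.2)).
Definition cc (g g1 : token) : C :=
  if g.1 then (if g1.1 then 0 else half_odd R g.2)
  else (if g1.1 then - half_odd R g1.2 else (g.2 - g1.2)%:~R).
Definition cz (g g1 : token) : C :=
  if g.1 then (if g1.1 then (if g.2 + g1.2 + 1 == 0 then half_odd R g.2 * l else 0) else 0)
  else (if g1.1 then 0 else
        (if g.2 + g1.2 == 0 then ((g.2 ^+ 3 - g.2)%:~R / 12%:R * c) else 0)).

Lemma act_comm g g1 x : act_tok g (act_tok g1 x) =
  act_tok g1 (act_tok g x) + cc g g1 *: act_tok (cg2 g g1) x + cz g g1 *: x.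
Proof.
case: g => [[] m]; case: g1 => [[] n]; rewrite /cc /cz /cg2 /Defs.act_tok /=.
- rewrite scale0r addr0; apply: subr_eqE; rewrite rel_hh.
  by case: ifP; rewrite ?scale0r.
- by rewrite scale0r addr0; apply: subr_eqE; rewrite -[LHS]opprB rel_dh scaleNr opprK.
- by rewrite scale0r addr0; apply: subr_eqE; rewrite rel_dh.
- rewrite -addrA; apply: subr_eqE; rewrite rel_dd.
  by case: ifP; rewrite ?scale0r.
Qed.

Lemma cz0 g g1 : tokdeg g + tokdeg g1 != 0 -> cz g g1 = 0.
Proof.
case: g => [[] m]; case: g1 => [[] n]; rewrite /cz /tokdeg /= => H //.
- by case: ifP => // /eqP E; move: H; rewrite -E; lia.
- by case: ifP => // /eqP E; move: H; lia.
Qed.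
Lemma cc0 g g1 : g.1 && g1.1 -> cc g g1 = 0.
Proof. by case: g => [[] m]; case: g1 => [[] n]. Qed.
Lemma cg2_deg g g1 : ~~ (g.1 && g1.1) -> tokdeg (cg2 g g1) = tokdeg g + tokdeg g1.
Proof. case: g => [[] m]; case: g1 => [[] n]; rewrite /cg2 /tokdeg //= => _; lia. Qed.

Lemma kap_shift t j e b d : kap t (j + d) (e + d%:~R / 2%:R) (b (+) oddz d) = kap t j e b.
Proof.
case: t => [[] n]; rewrite /kap /kd /kh /=.
- rewrite oddzD. by case: (oddz j); case: (oddz d); case: b.
- rewrite rmorphD /=. by field.
Qed.

Lemma kap_third g g1 j0 e b :
  kap g1 j0 e b * kap g (j0 + tokdeg g1) e b =
  kap g j0 e b * kap g1 (j0 + tokdeg g) e b + cc g g1 * kap (cg2 g g1) j0 e b.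
Proof.
case: g => [[] m]; case: g1 => [[] n]; rewrite /kap /kd /kh /cc /cg2 /tokdeg /half_odd /=;
rewrite ?(oddzD, oddz2, oddz1) ?(rmorphD, rmorphM, rmorphB, rmorphN) /= ?mul0r ?addr0;
case: (oddz j0); case: b => /=; by field.
Qed.

Lemma ac7 (q c1 zz x1 y1 u1 u2 : V) :
  q + c1 + zz + x1 + (y1 + (u1 + u2)) = q + y1 + (x1 + u1) + (c1 + u2) + zz.
Proof.
rewrite -!addrA; congr (q + _).
rewrite (addrCA x1 y1) (addrCA zz y1) (addrCA c1 y1); congr (y1 + _).
rewrite (addrCA zz x1) (addrCA c1 x1); congr (x1 + _).
rewrite (addrCA zz u1) (addrCA c1 u1); congr (u1 + _).
by rewrite (addrC zz).
Qed.

Lemma lin_ident (P Q X Y Z W : V) (b1 a1 b2 b3 a2 b4 cc' b5 z : C) :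
  b1 = a2 -> a1 = b3 -> a1 * b2 = a2 * b4 + cc' * b5 -> P = Q + cc' *: W + z *: Z ->
  P + b1 *: X + a1 *: (Y + b2 *: Z) =
  Q + b3 *: Y + a2 *: (X + b4 *: Z) + cc' *: (W + b5 *: Z) + z *: Z.
Proof.
move=> -> -> E ->.
rewrite !scalerDr !scalerA E scalerDl.
exact: ac7.
Qed.


Lemma single_at j (v : V) : single j v j = v.
Proof. by rewrite /single eqxx. Qed.
Lemma single_off j j' (v : V) : j' != j -> single j v j' = 0.
Proof. by rewrite /single => /negbTE ->. Qed.

Lemma opT_single_comb g j (u v : V) a : opT g (single j (u + a *: v)) =
  (fun j' => opT g (single j u) j' + a *: opT g (single j v) j').
Proof.
have -> : single j (u + a *: v) = (fun j' => single j u j' + (fun j'' => a *: single j v j'') j').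
  by rewrite single_add single_scale.
by rewrite opT_add opT_scale.
Qed.

Lemma comm_hom g g1 j0 x e b : dV 0 x = (h - e) *: x -> par x = psign b x ->
  let J := j0 + tokdeg g1 + tokdeg g in
  opT g (opT g1 (single j0 x)) J =
  opT g1 (opT g (single j0 x)) J + cc g g1 *: opT (cg2 g g1) (single j0 x) J
  + cz g g1 *: single j0 x J.
Proof.
move=> He Hb J.
have He1 := d0_tok g1 He; have Hb1 := par_tok g1 Hb.
have He2 := d0_tok g He; have Hb2 := par_tok g Hb.
rewrite (opT_single g1 j0 He Hb) opT_single_comb.
rewrite (opT_single g (j0 + tokdeg g1) He1 Hb1) (opT_single g (j0 + tokdeg g1) He Hb).
rewrite (opT_single g j0 He Hb) opT_single_comb.
rewrite (opT_single g1 (j0 + tokdeg g) He2 Hb2) (opT_single g1 (j0 + tokdeg g) He Hb).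
rewrite (opT_single (cg2 g g1) j0 He Hb).
have EJ : j0 + tokdeg g + tokdeg g1 = J by rewrite /J addrAC.
rewrite EJ !single_at.
have -> : cc g g1 *: single (j0 + tokdeg (cg2 g g1))
    (act_tok (cg2 g g1) x + kap (cg2 g g1) j0 e b *: x) J =
    cc g g1 *: (act_tok (cg2 g g1) x + kap (cg2 g g1) j0 e b *: x).
  case: (boolP (g.1 && g1.1)) => Hgg; first by rewrite cc0 // !scale0r.
  rewrite cg2_deg //. have -> : j0 + (tokdeg g + tokdeg g1) = J by rewrite /J; lia. by rewrite single_at.
have -> : cz g g1 *: single j0 x J = cz g g1 *: x.
  case: (eqVneq (tokdeg g + tokdeg g1) 0) => Hz.
    have -> : J = j0 by rewrite /J; move/eqP: Hz; lia. by rewrite single_at.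
  by rewrite cz0 // !scale0r.
apply: lin_ident.
- exact: kap_shift.
- by rewrite kap_shift.
- exact: kap_third.
- exact: act_comm.
Qed.


Lemma opT2_add g g1 j0 j (u v : V) :
  opT g (opT g1 (single j0 (u + v))) j =
  opT g (opT g1 (single j0 u)) j + opT g (opT g1 (single j0 v)) j.
Proof. by rewrite single_add !opT_add. Qed.
Lemma opT2_scale g g1 j0 j a (u : V) :
  opT g (opT g1 (single j0 (a *: u))) j = a *: opT g (opT g1 (single j0 u)) j.
Proof. by rewrite single_scale !opT_scale. Qed.
Lemma opT2_zero g g1 j0 j : opT g (opT g1 (single j0 (0 : V))) j = 0.
Proof. by rewrite single0 !opT_zero. Qed.
Lemma opT1_add g j0 j (u v : V) :
  opT g (single j0 (u + v)) j = opT g (single j0 u) j + opT g (single j0 v) j.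
Proof. by rewrite single_add !opT_add. Qed.
Lemma opT1_scale g j0 j a (u : V) :
  opT g (single j0 (a *: u)) j = a *: opT g (single j0 u) j.
Proof. by rewrite single_scale !opT_scale. Qed.
Lemma opT1_zero g j0 j : opT g (single j0 (0 : V)) j = 0.
Proof. by rewrite single0 !opT_zero. Qed.
Lemma single_addj j0 j (u v : V) : single j0 (u + v) j = single j0 u j + single j0 v j.
Proof. by rewrite single_add. Qed.
Lemma single_scalej j0 j a (u : V) : single j0 (a *: u) j = a *: single j0 u j.
Proof. by rewrite single_scale. Qed.

Lemma lin_comb (A B D A' B' D' : V) (a c' z : C) :
  a *: (A + c' *: B + z *: D) + (A' + c' *: B' + z *: D') =
  (a *: A + A') + c' *: (a *: B + B') + z *: (a *: D + D').
Proof.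
rewrite !scalerDr !scalerA [a * c']mulrC [a * z]mulrC -!scalerA.
by rewrite addrACA (addrACA (a *: A)).
Qed.

Lemma comm_single g g1 j0 (x : V) :
  let j := j0 + tokdeg g1 + tokdeg g in
  opT g (opT g1 (single j0 x)) j =
  opT g1 (opT g (single j0 x)) j + cc g g1 *: opT (cg2 g g1) (single j0 x) j
  + cz g g1 *: single j0 x j.
Proof.
move=> j.
have [P [HP ->]] := spanV x.
elim: P HP => [|p P IH] HP.
  by rewrite evalU_nil !opT2_zero opT1_zero /single; case: eqP; rewrite !scaler0 !addr0.
rewrite evalU_cons !(opT2_add, opT1_add, single_addj, opT2_scale, opT1_scale, single_scalej).
rewrite IH; last by move=> q Hq; apply: HP; rewrite inE Hq orbT.
rewrite (comm_hom _ _ _ (d0_word p.2 d0_v0) (par_word p.2 par_v0)).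
exact: lin_comb.
Qed.

Lemma opT_loc g (t : T) j : opT g t j = opT g (single (j - tokdeg g) (t (j - tokdeg g))) j.
Proof. case: g => [[] n]; rewrite /opT /tokdeg /= /hT /dT /single; by rewrite eqxx. Qed.

Lemma comm_T g g1 (t : T) j :
  opT g (opT g1 t) j = opT g1 (opT g t) j + cc g g1 *: opT (cg2 g g1) t j + cz g g1 *: t j.
Proof.
set j0 := j - tokdeg g1 - tokdeg g.
have Ej : j = j0 + tokdeg g1 + tokdeg g by rewrite /j0; lia.
have L1 : forall (t' : T), t' j0 = t j0 -> opT g (opT g1 t') j = opT g (opT g1 t) j.
  move=> t' Ht'. rewrite opT_loc [in RHS]opT_loc. congr (opT g (single _ _) j).
  rewrite opT_loc [in RHS]opT_loc. have -> : j - tokdeg g - tokdeg g1 = j0 by rewrite /j0; lia.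
  by rewrite Ht'.
have L2 : forall (t' : T), t' j0 = t j0 -> opT g1 (opT g t') j = opT g1 (opT g t) j.
  move=> t' Ht'. rewrite opT_loc [in RHS]opT_loc. congr (opT g1 (single _ _) j).
  rewrite opT_loc [in RHS]opT_loc. have -> : j - tokdeg g1 - tokdeg g = j0 by rewrite /j0; lia.
  by rewrite Ht'.
have L3 : cc g g1 *: opT (cg2 g g1) t j = cc g g1 *: opT (cg2 g g1) (single j0 (t j0)) j.
  case: (boolP (g.1 && g1.1)) => Hgg; first by rewrite cc0 // !scale0r.
  rewrite opT_loc [in RHS]opT_loc cg2_deg //.
  have -> : j - (tokdeg g + tokdeg g1) = j0 by rewrite /j0; lia.
  by rewrite single_at.
have L4 : cz g g1 *: t j = cz g g1 *: single j0 (t j0) j.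
  case: (eqVneq (tokdeg g + tokdeg g1) 0) => Hz; last by rewrite cz0 // !scale0r.
  have -> : j = j0 by rewrite Ej; move/eqP: Hz; lia.
  by rewrite single_at.
rewrite -(L1 (single j0 (t j0))) ?single_at // -(L2 (single j0 (t j0))) ?single_at // L3 L4.
rewrite Ej. exact: comm_single.
Qed.


Local Notation Wm := (gen_sub (opsDminus dV hV par h alpha beta gamma) (gensW v0 kk)).
Local Notation Wf := (gen_sub (opsD dV hV par h alpha beta gamma) (gensW v0 kk)).

Lemma Hdm n : n < 0 -> opsDminus dV hV par h alpha beta gamma (dT' n).
Proof. by move=> Hn; left; exists n. Qed.
Lemma Hhm s : s < 0 -> opsDminus dV hV par h alpha beta gamma (hT' s).
Proof. by move=> Hs; right; exists s. Qed.
Lemma Hdf n : n < 0 -> opsD dV hV par h alpha beta gamma (dT' n).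
Proof. by move=> Hn; left; exists n. Qed.
Lemma Hhf s : s < 0 -> opsD dV hV par h alpha beta gamma (hT' s).
Proof. by move=> Hs; right; exists s. Qed.

Lemma opsDminus_opT f : opsDminus dV hV par h alpha beta gamma f ->
  exists g, negtok g /\ f = opT g.
Proof.
case=> [[n [Hn ->]]|[s [Hs ->]]]; [exists (false, n) | exists (true, s)]; by split.
Qed.
Lemma opsD_opT f : opsD dV hV par h alpha beta gamma f -> exists g, f = opT g.
Proof. case=> [[n ->]|[s ->]]; [exists (false, n) | exists (true, s)]; by []. Qed.

Lemma nonneg_deg g : ~~ negtok g -> 0 <= tokdeg g.
Proof. case: g => [[] n]; rewrite /negtok /tokdeg /= => H; lia. Qed.

Lemma Wm_closed t : Wm t -> forall g, ~~ negtok g -> Wm (opT g t).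
Proof.
elim=> {t}.
- move=> t [i [Hi ->]] g Hg.
  change (Wm (opT g (single (kk + i) v0))).
  rewrite (opT_single g (kk + i) d0_v0 par_v0).
  apply: G_single; [exact: Hdm | exact: Hhm |].
  have := nonneg_deg Hg; lia.
- by move=> g _; rewrite opT_zero; apply: gs_zero.
- by move=> t u _ Ht _ Hu g Hg; rewrite opT_add; apply: gs_add; [apply: Ht | apply: Hu].
- by move=> a t _ Ht g Hg; rewrite opT_scale; apply: gs_scale; apply: Ht.
- move=> f u Hf Hu IH g Hg.
  have [g1 [Hg1 ->]] := opsDminus_opT Hf.
  have -> : opT g (opT g1 u) =
    (fun j => (fun j => opT g1 (opT g u) j + (fun j => cc g g1 *: opT (cg2 g g1) u j) j) j
              + (fun j => cz g g1 *: u j) j).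
    by apply: functional_extensionality => j; rewrite comm_T.
  apply: gs_add; last by apply: gs_scale.
  apply: gs_add.
    apply: gs_op; last exact: IH.
    case: g1 Hg1 => [[] n] Hn; [right; exists n | left; exists n]; by split.
  apply: gs_scale.
  case: (boolP (negtok (cg2 g g1))) => H2; last exact: IH.
  apply: gs_op => //.
  case: (cg2 g g1) H2 => [[] n] Hn; [right; exists n | left; exists n]; by split.
Qed.

Lemma W_iff t : Wf t <-> Wm t.
Proof.
split.
- elim=> {t}.
  + by move=> t Ht; apply: gs_gen.
  + exact: gs_zero.
  + by move=> t u _ Ht _ Hu; apply: gs_add.
  + by move=> a t _ Ht; apply: gs_scale.
  + move=> f t Hf _ Ht.
    have [g ->] := opsD_opT Hf.
    case: (boolP (negtok g)) => Hg; last exact: Wm_closed.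
    apply: gs_op => //.
    case: g Hg => [[] n] Hn; [right; exists n | left; exists n]; by split.
- elim=> {t}.
  + by move=> t Ht; apply: gs_gen.
  + exact: gs_zero.
  + by move=> t u _ Ht _ Hu; apply: gs_add.
  + by move=> a t _ Ht; apply: gs_scale.
  + move=> f t Hf _ Ht; apply: gs_op => //.
    by case: Hf => [[n [_ ->]]|[s [_ ->]]]; [left; exists n | right; exists s].
Qed.

Lemma evalU_hom P d : (forall p, p \in P -> wdeg p.2 = d) ->
  dV 0 (evalU P v0) = (h - d%:~R / 2%:R) *: evalU P v0 /\
  par (evalU P v0) = psign (oddz d) (evalU P v0).
Proof.
elim: P => [|p P IH] HP; first by rewrite evalU_nil !linear0 /psign; split => //; case: oddz; rewrite ?oppr0.
have HP' : forall q, q \in P -> wdeg q.2 = d by move=> q Hq; apply: HP; rewrite inE Hq orbT.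
have [IH1 IH2] := IH HP'.
have Hp : wdeg p.2 = d by apply: HP; rewrite inE eqxx.
rewrite evalU_cons (linearD (dV 0)) [dV 0 (_ *: _)]linearZ (linearD par) [par (_ *: _)]linearZ.
rewrite IH1 IH2 (d0_word p.2 d0_v0) (par_word p.2 par_v0).
rewrite /hdeg Hp add0r /=; split.
  by rewrite [RHS]scalerDr !scalerA mulrC.
by rewrite /psign; case: oddz; rewrite ?opprD ?scalerN.
Qed.

Lemma main_sec :
  [/\ (forall t, Wf t <-> Wm t),
      (forall s : seq (int * V), (forall p, p \in s -> kk <= p.1) -> Wf (sumT s)),
      (forall v : V, exists (w : V) (a : C), Wf (single (kk - 1) w) /\ v = w + a *: v0) /\
      (forall a : C, Wf (single (kk - 1) (a *: v0)) -> a = 0) &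
      (forall P : seq (C * seq token),
         (forall p, p \in P -> negword p.2) ->
         (exists d : int, forall p, p \in P -> wdeg p.2 = d) ->
         Wf (single (kk - 1) (evalU P v0)) ->
         forall Q : seq (C * seq token),
           (forall q, q \in Q -> negword q.2) ->
           Wf (single (kk - 1) (evalU Q (evalU P v0))))].
Proof.
split.
- exact: W_iff.
- apply: G_sumT; [exact: Hdf | exact: Hhf].
- split.
  + pose S := fun v : V => exists (w : V) (a : C), Wf (single (kk - 1) w) /\ v = w + a *: v0.
    have S0 : S 0 by exists 0, 0; rewrite scale0r addr0; split => //; apply: G_single0.
    have SD : forall u v, S u -> S v -> S (u + v).
      move=> u v [w1 [a1 [H1 ->]]] [w2 [a2 [H2 ->]]]; exists (w1 + w2), (a1 + a2); split.
        exact: G_single_add.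
      by rewrite scalerDl addrACA.
    have SZ : forall a u, S u -> S (a *: u).
      move=> a u [w1 [a1 [H1 ->]]]; exists (a *: w1), (a * a1); split.
        exact: G_single_scale.
      by rewrite scalerDr scalerA.
    have SW : forall w, Wf (single (kk - 1) w) -> S w.
      by move=> w Hw; exists w, 0; rewrite scale0r addr0.
    have Sv0 : S v0 by exists 0, 1; rewrite scale1r add0r; split => //; apply: G_single0.
    move=> v; have [P [HP ->]] := spanV v.
    suff : S (evalU P v0) by [].
    elim: P HP => [|p P IH] HP; first by rewrite evalU_nil.
    rewrite evalU_cons; apply: (SD _ _); last by apply: IH => q Hq; apply: HP; rewrite inE Hq orbT.
    apply: (SZ _ _); apply: (lower_word Hdf Hhf S0 SD SZ SW d0_v0 par_v0 Sv0).
    by apply: pbw_neg; apply: HP; rewrite inE eqxx.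
  + move=> a /W_iff /Wminus_Phi; rewrite single_at Phi_scale Phi_v0 mulr1 => ->.
    by [].
- move=> P HP [d Hd] HW Q HQ.
  have [He Hb] := evalU_hom Hd.
  pose S := fun v : V => Wf (single (kk - 1) v).
  have S0 : S 0 by apply: G_single0.
  have SD : forall u v, S u -> S v -> S (u + v) by move=> u v; apply: G_single_add.
  have SZ : forall a u, S u -> S (a *: u) by move=> a u; apply: G_single_scale.
  suff : S (evalU Q (evalU P v0)) by [].
  elim: Q HQ => [|q Q IH] HQ; first by rewrite evalU_nil.
  rewrite evalU_cons; apply: (SD _ _); last by apply: IH => q' Hq'; apply: HQ; rewrite inE Hq' orbT.
  apply: (SZ _ _); apply: (lower_word Hdf Hhf S0 SD SZ _ He Hb HW) => //.
  by apply: HQ; rewrite inE eqxx.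
Qed.

End Main.

Theorem lemma3p6 (R : realType) (V : lmodType R[i])
    (dV hV : int -> {linear V -> V}) (par : {linear V -> V}) (v0 : V)
    (c h l alpha beta gamma : R[i]) (kk : int) :
  l != 0 -> gamma != 0 ->
  is_Verma dV hV v0 c h l ->
  parity_op dV hV par v0 ->
  let W := gen_sub (opsD dV hV par h alpha beta gamma) (gensW v0 kk) in
  [/\ (* (1) *)
      (forall t, W t <-> gen_sub (opsDminus dV hV par h alpha beta gamma)
                                 (gensW v0 kk) t),
      (* (2) *)
      (forall s : seq (int * V), (forall p, p \in s -> kk <= p.1) ->
         W (sumT s)),
      (* (3) *)
      (forall v : V, exists (w : V) (a : R[i]),
         W (single (kk - 1) w) /\ v = w + a *: v0) /\
      (forall a : R[i], W (single (kk - 1) (a *: v0)) -> a = 0) &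
      (* (4) *)
      (forall P : seq (R[i] * seq token),
         (forall p, p \in P -> negword p.2) ->
         (exists d : int, forall p, p \in P -> wdeg p.2 = d) ->
         W (single (kk - 1) (evalU dV hV P v0)) ->
         forall Q : seq (R[i] * seq token),
           (forall q, q \in Q -> negword q.2) ->
           W (single (kk - 1) (evalU dV hV Q (evalU dV hV P v0))))].
Proof.
move=> _ _ Hver Hpar W.
exact: (main_sec alpha beta gamma kk Hver Hpar).
Qed.
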